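(* Fix $V_{\sf P}\ge 0$ and $\delta\in[0,1)$, and let $\rho=\frac{1}{1+e+e^{V_{\sf P}+1}}$. Then, as $p\to0$, $$\lim_{p\to0}{\sf Eng}({\sf PEAR})=\frac{1}{1-\delta\rho}\cdot\frac{e^{V_{\sf P}}+e^{-1}}{1+e^{V_{\sf P}}+e^{-1}}+\frac{1}{1-\delta}\cdot\frac{\delta(1-\rho)}{1-\delta\rho}\cdot\frac{2e^{V_{\sf P}}}{1+2e^{V_{\sf P}}},$$ $$\lim_{p\to0}{\sf Util}({\sf PEAR})=\frac{1}{1-\delta}+\frac{1}{1-\delta\rho}\ln\!\left(1+e^{-1}+e^{V_{\sf P}}\right)+\frac{1}{1-\delta}\cdot\frac{\delta(1-\rho)}{1-\delta\rho}\ln\!\left(1+2e^{V_{\sf P}}\right).$$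
   Context: Model. Time $t=0,1,2,\dots$, discount factor $\delta\in[0,1)$. There are two item types, popular ${\sf P}$ and niche ${\sf N}$, each with infinitely many items. At each time $t$ the platform recommends a set $\pi_t$ of two fresh items, each of a chosen type. The user's utility for an item $i$ of type $\tau(i)$ is $u_i=V_{\tau(i)}+\epsilon_i$, and for the outside option $\emptyset$ it is $u_\emptyset=\epsilon_\emptyset$. All noise terms are i.i.d. Gumbel with scale $1$ and mean $0$ (CDF $\exp(-\exp(-(x+\gamma)))$, $\gamma$ the Euler–Mascheroni constant). The user chooses $c_t=\arg\max_{j\in\pi_t\cup\{\emptyset\}}u_j$. $V_{\sf P}$ is a known constant; $V_{\sf N}$ is drawn once for the user, fixed over time, independent of the noise, with $\mathbb P(V_{\sf N}=(1-p)/p)=p$, $\mathbb P(V_{\sf N}=-1)=1-p$, $p\in(0,1)$. ${\sf Eng}(\pi)=\sum_{t\ge0}\delta^t\mathbb P(c_t\ne\emptyset)$, ${\sf Util}(\pi)=\sum_{t\ge0}\delta^t\mathbb E[\max_{j\in\pi_t\cup\{\emptyset\}}u_j]$ (expectations also over $V_{\sf N}$). Policy ${\sf PEAR}$: let $\rho_1=\frac{e^{(1-p)/p}}{1+e^{V_{\sf P}}+e^{(1-p)/p}}$, $\rho_2=\frac{e^{-1}}{1+e^{V_{\sf P}}+e^{-1}}$. Maintain counters $S,F$ (initially $0$) and $p_0=p$. At each time $t$: if $p_t\ge p$, recommend one popular and one niche item; if the chosen item is the niche item increment $S$, otherwise (popular item or outside option chosen) increment $F$. If $p_t<p$, recommend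 two popular items (counters unchanged). Then set $p_{t+1}=\left(1+\frac{1-p}{p}\cdot\frac{\rho_2^S(1-\rho_2)^F}{\rho_1^S(1-\rho_1)^F}\right)^{-1}$. *)

(* Defs.v *)
From Stdlib Require Import Reals Lra.
From Coquelicot Require Import Coquelicot.
Open Scope R_scope.

Definition euler_gamma : R :=
  real (Lim_seq (fun n => sum_f_R0 (fun k => / INR (S k)) n - ln (INR (S n)))).

(* Standard Gumbel noise with scale 1 and mean 0:
   CDF exp(-exp(-(x+gamma))), density its derivative. *)
Definition gumbel_cdf (x : R) : R := exp (- exp (- (x + euler_gamma))).
Definition gumbel_pdf (x : R) : R := exp (- (x + euler_gamma)) * gumbel_cdf x.

Definition integral_R (f : R -> R) : R :=
  RInt_gen f (Rbar_locally m_infty) (Rbar_locally p_infty).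

(* Three options with utilities u_j = a_j + eps_j, eps_j iid Gumbel.
   win3 a b c = P(option with mean a has the maximal utility)
              = int g(x-a) G(x-b) G(x-c) dx. *)
Definition win3 (a b c : R) : R :=
  integral_R (fun x => gumbel_pdf (x - a) * gumbel_cdf (x - b) * gumbel_cdf (x - c)).

(* E[max(a+eps_1, b+eps_2, c+eps_3)] = int x * (density of the max) dx. *)
Definition emax3 (a b c : R) : R :=
  integral_R (fun x => x *
    (gumbel_pdf (x - a) * gumbel_cdf (x - b) * gumbel_cdf (x - c)
   + gumbel_pdf (x - b) * gumbel_cdf (x - a) * gumbel_cdf (x - c)
   + gumbel_pdf (x - c) * gumbel_cdf (x - a) * gumbel_cdf (x - b))).

Definition rho1 (p VP : R) : R :=
  exp ((1 - p) / p) / (1 + exp VP + exp ((1 - p) / p)).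
Definition rho2 (VP : R) : R := exp (-1) / (1 + exp VP + exp (-1)).

(* posterior p_t as a function of the counters S, F *)
Definition pear_post (p VP : R) (S F : nat) : R :=
  / (1 + (1 - p) / p *
         ((rho2 VP ^ S * (1 - rho2 VP) ^ F) / (rho1 p VP ^ S * (1 - rho1 p VP) ^ F))).

(* explore (recommend one popular + one niche) iff p_t >= p *)
Definition pear_explore (p VP : R) (S F : nat) : bool :=
  if Rle_dec p (pear_post p VP S F) then true else false.

(* Given the realised niche value vN, the counters (S,F) evolve as a Markov
   chain (fresh items and iid noise each period).  pear_exp t f S F is the
   expectation of f(S_t', F_t') after t more periods started from (S,F).
   Menu when exploring: outside option (mean 0), popular (VP), niche (vN). *)
Fixpoint pear_exp (p VP vN : R) (t : nat) (f : nat -> nat -> R) (S F : nat) : R :=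
  match t with
  | O => f S F
  | Datatypes.S t' =>
      if pear_explore p VP S F then
        win3 vN 0 VP * pear_exp p VP vN t' f (Datatypes.S S) F
        + (win3 VP 0 vN + win3 0 VP vN) * pear_exp p VP vN t' f S (Datatypes.S F)
      else pear_exp p VP vN t' f S F
  end.

(* P(c_t <> outside) in state (S,F) *)
Definition eng_reward (p VP vN : R) (S F : nat) : R :=
  if pear_explore p VP S F then win3 VP 0 vN + win3 vN 0 VP
  else win3 VP 0 VP + win3 VP 0 VP.

Definition util_reward (p VP vN : R) (S F : nat) : R :=
  if pear_explore p VP S F then emax3 0 VP vN else emax3 0 VP VP.

(* Expectation also over V_N: (1-p)/p w.p. p, -1 w.p. 1-p. *)
Definition pear_eng (VP delta p : R) : R :=
  Series (fun t => delta ^ t *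
    (p * pear_exp p VP ((1 - p) / p) t (eng_reward p VP ((1 - p) / p)) 0 0
     + (1 - p) * pear_exp p VP (-1) t (eng_reward p VP (-1)) 0 0)).

Definition pear_util (VP delta p : R) : R :=
  Series (fun t => delta ^ t *
    (p * pear_exp p VP ((1 - p) / p) t (util_reward p VP ((1 - p) / p)) 0 0
     + (1 - p) * pear_exp p VP (-1) t (util_reward p VP (-1)) 0 0)).

(* Main.v *)
Require Import Defs.
From Stdlib Require Import Reals Lra Lia ZArith.
From Coquelicot Require Import Coquelicot.
Open Scope R_scope.

Lemma ln_le_xm1 x : 0 < x -> ln x <= x - 1.
Proof. intros Hx. generalize (exp_ineq1_le (ln x)). rewrite exp_ln; lra. Qed.

Lemma exp_mul_pow (n : nat) x : exp (INR n * x) = exp x ^ n.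
Proof.
  induction n as [|n IH]. simpl. rewrite Rmult_0_l, exp_0; ring.
  rewrite S_INR. simpl pow. replace ((INR n + 1) * x) with (x + INR n * x) by ring.
  rewrite exp_plus, IH; ring.
Qed.

Lemma pow_le1 x n : 0 <= x <= 1 -> x ^ n <= 1.
Proof. intros. rewrite <- (pow1 n). apply pow_incr; lra. Qed.

Lemma one_minus_pow_le (x : R) (n : nat) : 0 <= x <= 1 ->
  0 <= 1 - x ^ n <= INR n * (1 - x).
Proof.
  intros Hx. induction n as [|n IH]. simpl. lra.
  rewrite S_INR. simpl pow.
  assert (0 <= x ^ n <= 1) by (split; [apply pow_le; lra| apply pow_le1; lra]).
  split; nra.
Qed.

Lemma t_exp_le1 t : t * exp (- t) <= 1.
Proof.
  rewrite exp_Ropp. generalize (exp_ineq1_le t) (exp_pos t); intros.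
  apply (Rmult_le_reg_r (exp t)); auto.
  rewrite Rmult_assoc, Rinv_l by lra. lra.
Qed.

Lemma exp_approx (n : nat) t : (1 <= n)%nat -> 0 <= t <= INR n ->
  0 <= exp (- t) - (1 - t / INR n) ^ n <= t * t * exp (- t) / INR n.
Proof.
  intros Hn Ht.
  assert (Hm : 0 < INR n) by (apply lt_0_INR; lia).
  set (s := t / INR n).
  assert (Hs : 0 <= s <= 1).
  { unfold s; split. apply Rdiv_le_0_compat; lra.
    apply (Rmult_le_reg_r (INR n)); auto. unfold Rdiv. rewrite Rmult_assoc, Rinv_l; lra. }
  assert (Hts : t = INR n * s) by (unfold s; field; lra).
  set (x := exp s * (1 - s)).
  assert (Hx1 : x <= 1).
  { unfold x. generalize (exp_ineq1_le (- s)); intro H. rewrite exp_Ropp in H.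
    generalize (exp_pos s); intro Hp.
    apply (Rmult_le_reg_r (/ exp s)). apply Rinv_0_lt_compat; auto.
    replace (exp s * (1 - s) * / exp s) with (1 - s) by (field; lra). lra. }
  assert (Hx0 : 1 - s * s <= x).
  { unfold x. generalize (exp_ineq1_le s); intro H. nra. }
  assert (Hpow : (1 - s) ^ n = exp (- t) * x ^ n).
  { unfold x. rewrite Rpow_mult_distr, <- exp_mul_pow, <- Hts, <- Rmult_assoc, <- exp_plus.
    replace (- t + t) with 0 by ring. rewrite exp_0; ring. }
  rewrite Hpow.
  destruct (one_minus_pow_le x n) as [H1 H2]. nra.
  generalize (exp_pos (- t)); intro He.
  split. nra.
  replace (exp (- t) - exp (- t) * x ^ n) with (exp (- t) * (1 - x ^ n)) by ring.
  apply Rle_trans with (exp (- t) * (INR n * (s * s))).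
  apply Rmult_le_compat_l; nra.
  right. rewrite Hts. field. lra.
Qed.

Lemma cont_R (f : R -> R) x : ex_derive f x -> continuous f x.
Proof. intros H. exact (@ex_derive_continuous R_AbsRing R_NormedModule f x H). Qed.

Definition qf (n : nat) (t : R) := (1 - t / INR n) ^ n.
Definition Pf (n : nat) (t : R) := sum_f_R0 (fun k => (1 - t / INR n) ^ k) (pred n) / INR n.
Definition Qf (n : nat) (t : R) := sum_f_R0 (fun k => - ((1 - t / INR n) ^ (S k) / INR (S k))) (pred n).
Definition Hn (n : nat) := sum_f_R0 (fun k => / INR (S k)) (pred n).

Lemma is_derive_sum (g : nat -> R -> R) (dg : nat -> R) t N :
  (forall k, is_derive (g k) t (dg k)) ->
  is_derive (fun x => sum_f_R0 (fun k => g k x) N) t (sum_f_R0 dg N).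
Proof.
  intros H. induction N as [|N IH]; simpl. apply H.
  apply (is_derive_plus (fun x => sum_f_R0 (fun k => g k x) N) (g (S N))); auto.
Qed.

Lemma continuous_sum (g : nat -> R -> R) t N :
  (forall k, continuous (g k) t) ->
  continuous (fun x => sum_f_R0 (fun k => g k x) N) t.
Proof.
  intros H. induction N as [|N IH]; simpl. apply H.
  apply (continuous_plus (fun x => sum_f_R0 (fun k => g k x) N) (g (S N))); auto.
Qed.

Lemma Qf_deriv n t : (1 <= n)%nat -> is_derive (Qf n) t (Pf n t).
Proof.
  intros Hn. assert (Hm : 0 < INR n) by (apply lt_0_INR; lia).
  unfold Qf, Pf.
  assert (E : sum_f_R0 (fun k => (1 - t / INR n) ^ k) (pred n) / INR n =
     sum_f_R0 (fun k => (1 - t / INR n) ^ k / INR n) (pred n)).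
  { induction (pred n) as [|j IH]; simpl. field; lra.
    rewrite <- IH. field; lra. }
  rewrite E.
  apply (is_derive_sum (fun k x => - ((1 - x / INR n) ^ S k / INR (S k)))).
  intros k. auto_derive. auto.
  assert (Hk : match k with 0%nat => 1 | S _ => INR k + 1 end = INR (S k)).
  { destruct k. simpl; ring. rewrite (S_INR (S k)); reflexivity. }
  rewrite Hk. assert (0 < INR (S k)) by apply lt_0_INR, Nat.lt_0_succ.
  unfold Rminus, Rdiv. field. split; lra.
Qed.

Lemma sum_bounds (g : nat -> R) N : (forall k, 0 <= g k <= 1) ->
  0 <= sum_f_R0 g N <= INR (S N).
Proof.
  intros H. induction N as [|N IH]. simpl. specialize (H 0%nat). lra.
  change (sum_f_R0 g (S N)) with (sum_f_R0 g N + g (S N)).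
  specialize (H (S N)). rewrite (S_INR (S N)). lra.
Qed.

Lemma Pf_bounds n t : (1 <= n)%nat -> 0 <= t <= INR n -> 0 <= Pf n t <= 1.
Proof.
  intros Hn Ht. assert (Hm : 0 < INR n) by (apply lt_0_INR; lia).
  assert (Hx : 0 <= 1 - t / INR n <= 1).
  { split. apply (Rmult_le_reg_r (INR n)); auto. unfold Rdiv.
    rewrite Rmult_minus_distr_r, Rmult_assoc, Rinv_l; lra.
    assert (0 <= t / INR n) by (apply Rdiv_le_0_compat; lra). lra. }
  destruct (sum_bounds (fun k => (1 - t / INR n) ^ k) (pred n)) as [H1 H2].
  { intros k; split. apply pow_le; lra. apply pow_le1; lra. }
  replace (S (pred n)) with n in H2 by lia.
  unfold Pf. split. apply Rdiv_le_0_compat; lra.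
  apply (Rmult_le_reg_r (INR n)); auto. unfold Rdiv. rewrite Rmult_assoc, Rinv_l; lra.
Qed.

Lemma Pf_eq n t : (1 <= n)%nat -> t * Pf n t = 1 - qf n t.
Proof.
  intros Hn. assert (Hm : 0 < INR n) by (apply lt_0_INR; lia).
  unfold Pf, qf. generalize (GP_finite (1 - t / INR n) (pred n)).
  replace (pred n + 1)%nat with n by lia. intros H.
  replace (t * (sum_f_R0 (fun k : nat => (1 - t / INR n) ^ k) (pred n) / INR n))
    with (- (sum_f_R0 (fun k : nat => (1 - t / INR n) ^ k) (pred n) * (1 - t / INR n - 1)))
    by (field; lra).
  rewrite H. ring.
Qed.

Lemma Pf_cont n t : continuous (Pf n) t.
Proof.
  unfold Pf, Rdiv.
  apply (continuous_mult (fun t => sum_f_R0 (fun k => (1 - t / INR n) ^ k) (pred n)) (fun _ => / INR n)).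
  apply (continuous_sum (fun k x => (1 - x / INR n) ^ k)).
  intros k. apply cont_R. auto_derive. auto.
  apply continuous_const.
Qed.

Lemma Qf_vals n : (1 <= n)%nat -> Qf n (INR n) - Qf n 0 = Hn n.
Proof.
  intros H1n. assert (Hm : 0 < INR n) by (apply lt_0_INR; lia).
  unfold Qf, Hn. replace (INR n / INR n) with 1 by (field; lra).
  replace (0 / INR n) with 0 by (field; lra).
  induction (pred n) as [|j IH].
  - simpl. field.
  - change (sum_f_R0 (fun k : nat => - ((1 - 1) ^ S k / INR (S k))) (S j)) with
      (sum_f_R0 (fun k : nat => - ((1 - 1) ^ S k / INR (S k))) j + - ((1 - 1) ^ S (S j) / INR (S (S j)))).
    change (sum_f_R0 (fun k : nat => - ((1 - 0) ^ S k / INR (S k))) (S j)) with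
      (sum_f_R0 (fun k : nat => - ((1 - 0) ^ S k / INR (S k))) j + - ((1 - 0) ^ S (S j) / INR (S (S j)))).
    change (sum_f_R0 (fun k : nat => / INR (S k)) (S j)) with
      (sum_f_R0 (fun k : nat => / INR (S k)) j + / INR (S (S j))).
    rewrite <- IH. assert (0 < INR (S (S j))) by apply lt_0_INR, Nat.lt_0_succ.
    replace ((1 - 1) ^ S (S j)) with 0 by (simpl; ring).
    replace ((1 - 0) ^ S (S j)) with 1 by (rewrite Rminus_0_r, pow1; ring).
    field. lra.
Qed.

Lemma Hn_int n : (1 <= n)%nat -> is_RInt (Pf n) 0 (INR n) (Hn n).
Proof.
  intros H1n. rewrite <- Qf_vals by exact H1n.
  apply (is_RInt_derive (Qf n) (Pf n)).
  intros x _. apply Qf_deriv; exact H1n.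
  intros x _. apply Pf_cont.
Qed.

Lemma exRI_cont (f : R -> R) a b : (forall z, Rmin a b <= z <= Rmax a b -> continuous f z) -> ex_RInt f a b.
Proof. intros H. exact (@ex_RInt_continuous R_CompleteNormedModule f a b H). Qed.

Lemma exRI_pos (f : R -> R) A B : 0 < A -> A <= B -> (forall t, 0 < t -> ex_derive f t) -> ex_RInt f A B.
Proof.
  intros HA HAB H. apply exRI_cont. intros z Hz.
  rewrite Rmin_left, Rmax_right in Hz by lra. apply cont_R, H; lra.
Qed.

Lemma exRI_all (f : R -> R) A B : (forall t, ex_derive f t) -> ex_RInt f A B.
Proof. intros H. apply exRI_cont. intros z Hz. apply cont_R, H. Qed.

Lemma exRI_Pf n A B : ex_RInt (Pf n) A B.
Proof. apply exRI_cont. intros z _. apply Pf_cont. Qed.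

Definition Iab A B := RInt (fun t => - ln t * exp (- t)) A B.

Lemma RInt_minus' (f g : R -> R) a b : ex_RInt f a b -> ex_RInt g a b ->
  RInt (fun x => f x - g x) a b = RInt f a b - RInt g a b.
Proof. intros. apply (RInt_minus f g); auto. Qed.

Lemma RInt_plus' (f g : R -> R) a b : ex_RInt f a b -> ex_RInt g a b ->
  RInt (fun x => f x + g x) a b = RInt f a b + RInt g a b.
Proof. intros. apply (RInt_plus f g); auto. Qed.

Lemma RInt_Chasles' (f : R -> R) a b c : ex_RInt f a b -> ex_RInt f b c ->
  RInt f a b + RInt f b c = RInt f a c.
Proof. intros. apply (RInt_Chasles f); auto. Qed.

Lemma step1 A B : 0 < A -> A <= B ->
  Iab A B = RInt (fun t => (1 - exp (- t)) / t) A B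
            - (ln B * (1 - exp (- B)) - ln A * (1 - exp (- A))).
Proof.
  intros HA HAB.
  assert (HD : RInt (fun t => (1 - exp (- t)) / t + ln t * exp (- t)) A B =
               ln B * (1 - exp (- B)) - ln A * (1 - exp (- A))).
  { apply is_RInt_unique.
    apply (is_RInt_derive (fun t => ln t * (1 - exp (- t)))).
    - intros x Hx. rewrite Rmin_left, Rmax_right in Hx by lra.
      auto_derive; [lra|field; lra].
    - intros x Hx. rewrite Rmin_left, Rmax_right in Hx by lra.
      apply cont_R. auto_derive. repeat split; lra. }
  rewrite <- HD. unfold Iab.
  rewrite <- RInt_minus'.
  - apply RInt_ext. intros x Hx. lazymatch goal with |- ?a = ?b => change (a = b :> R) end. ring.
  - apply exRI_pos; auto. intros t Ht. auto_derive. repeat split; lra.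
  - apply exRI_pos; auto. intros t Ht. auto_derive. repeat split; lra.
Qed.

Ltac req := lazymatch goal with |- ?a = ?b => change (a = b :> R) end.

Lemma step2 n A B : (1 <= n)%nat -> 0 < A -> A <= B ->
  RInt (fun t => (1 - exp (- t)) / t) A B =
  RInt (Pf n) A B + RInt (fun t => (qf n t - exp (- t)) / t) A B.
Proof.
  intros Hn HA HAB. rewrite <- RInt_plus'.
  - apply RInt_ext. intros x Hx. rewrite Rmin_left, Rmax_right in Hx by lra.
    req. assert (E := Pf_eq n x Hn).
    replace (Pf n x) with ((1 - qf n x) / x) by (rewrite <- E; field; lra).
    field; lra.
  - apply exRI_Pf.
  - apply exRI_cont. intros z Hz. rewrite Rmin_left, Rmax_right in Hz by lra.
    unfold qf. apply cont_R. auto_derive. lra.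
Qed.

Lemma step3 n A B : (1 <= n)%nat ->
  Hn n = RInt (Pf n) 0 A + RInt (Pf n) A B + RInt (Pf n) B (INR n).
Proof.
  intros Hn. rewrite RInt_Chasles', RInt_Chasles'; try apply exRI_Pf.
  symmetry. apply is_RInt_unique, Hn_int; auto.
Qed.

Lemma step4 n B : (1 <= n)%nat -> 0 < B -> B <= INR n ->
  RInt (Pf n) B (INR n) = (ln (INR n) - ln B) - RInt (fun t => qf n t / t) B (INR n).
Proof.
  intros Hn HB HBm.
  assert (HL : RInt (fun t => / t) B (INR n) = ln (INR n) - ln B).
  { apply is_RInt_unique. apply (is_RInt_derive ln (fun t => / t)).
    - intros x Hx. rewrite Rmin_left, Rmax_right in Hx by lra. apply is_derive_ln. lra.
    - intros x Hx. rewrite Rmin_left, Rmax_right in Hx by lra. apply cont_R. auto_derive. lra. }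
  rewrite <- HL, <- RInt_minus'.
  - apply RInt_ext. intros x Hx. rewrite Rmin_left, Rmax_right in Hx by lra.
    req. assert (E := Pf_eq n x Hn).
    replace (Pf n x) with ((1 - qf n x) / x) by (rewrite <- E; field; lra).
    field; lra.
  - apply exRI_pos; auto. intros t Ht. auto_derive. lra.
  - apply exRI_pos; auto. intros t Ht. unfold qf. auto_derive. lra.
Qed.

Lemma J1_bound n A B : (1 <= n)%nat -> 0 < A -> A <= B -> B <= INR n ->
  Rabs (RInt (fun t => (qf n t - exp (- t)) / t) A B) <= B / INR n.
Proof.
  intros Hn HA HAB HBm. assert (Hm : 0 < INR n) by (apply lt_0_INR; lia).
  apply Rle_trans with ((B - A) * (/ INR n)).
  apply abs_RInt_le_const; auto.
  - apply exRI_pos; auto. intros t Ht. unfold qf. auto_derive. lra.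
  - intros t Ht. destruct (exp_approx n t Hn) as [H1 H2]. lra.
    unfold qf. rewrite Rabs_left1.
    + apply (Rmult_le_reg_r t). lra. unfold Rdiv.
      replace (- ((((1 - t * / INR n) ^ n - exp (- t)) * / t)) * t) with
        (exp (- t) - (1 - t / INR n) ^ n) by (unfold Rdiv; field; lra).
      apply Rle_trans with (t * t * exp (- t) / INR n); auto.
      generalize (t_exp_le1 t); intro. unfold Rdiv.
      assert (0 < / INR n) by (apply Rinv_0_lt_compat; auto).
      assert (0 <= t * / INR n) by (apply Rmult_le_pos; lra).
      nra.
    + unfold Rdiv. apply Rmult_le_0_r. lra. left; apply Rinv_0_lt_compat; lra.
  - apply Rle_trans with (B * / INR n). apply Rmult_le_compat_r.
    left; apply Rinv_0_lt_compat; auto. lra. right; reflexivity.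
Qed.

Lemma J2_bound n A : (1 <= n)%nat -> 0 < A -> A <= INR n ->
  0 <= RInt (Pf n) 0 A <= A.
Proof.
  intros Hn HA HAm. split.
  - apply RInt_ge_0. lra. apply exRI_Pf. intros x Hx. apply Pf_bounds; auto; lra.
  - apply Rle_trans with (Rabs (RInt (Pf n) 0 A)). apply Rle_abs.
    apply Rle_trans with ((A - 0) * 1). apply abs_RInt_le_const. lra. apply exRI_Pf.
    intros t Ht. destruct (Pf_bounds n t Hn) as [H1 H2]. lra. rewrite Rabs_pos_eq; lra.
    lra.
Qed.

Lemma J3_bound n B : (1 <= n)%nat -> 1 <= B -> B <= INR n ->
  0 <= RInt (fun t => qf n t / t) B (INR n) <= exp (- B).
Proof.
  intros Hn HB HBm.
  assert (Hq : forall t, B <= t <= INR n -> 0 <= qf n t <= exp (- t)).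
  { intros t Ht. destruct (exp_approx n t Hn) as [H1 H2]. lra. split. unfold qf.
    apply pow_le. assert (Hm : 0 < INR n) by lra.
    assert (t / INR n <= 1). { apply (Rmult_le_reg_r (INR n)); auto. unfold Rdiv.
      rewrite Rmult_assoc, Rinv_l; lra. } lra. unfold qf; lra. }
  split.
  - apply RInt_ge_0. auto. apply exRI_pos; try lra. intros t Ht. unfold qf. auto_derive. lra.
    intros x Hx. apply Rdiv_le_0_compat. apply Hq; lra. lra.
  - apply Rle_trans with (RInt (fun t => exp (- t)) B (INR n)).
    apply RInt_le; auto.
    apply exRI_pos; try lra. intros t Ht. unfold qf. auto_derive. lra.
    apply exRI_all. intros t. auto_derive. auto.
    intros x Hx. destruct (Hq x) as [H1 H2]. lra.
    apply Rle_trans with (qf n x). apply (Rmult_le_reg_r x). lra. unfold Rdiv.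
    rewrite Rmult_assoc, Rinv_l by lra. nra. lra.
    assert (E : RInt (fun t => exp (- t)) B (INR n) = - exp (- INR n) - - exp (- B)).
    { apply is_RInt_unique. apply (is_RInt_derive (fun t => - exp (- t))).
      intros x _. auto_derive. auto. ring. intros x _. apply cont_R. auto_derive. auto. }
    rewrite E. generalize (exp_pos (- INR n)). lra.
Qed.

Lemma exp_sq_bound x : 0 <= x -> x * x <= 4 * exp x.
Proof.
  intros Hx. replace x with (x / 2 + x / 2) at 3 by field. rewrite exp_plus.
  generalize (exp_ineq1_le (x / 2)); intro H. nra.
Qed.

Lemma xlnx_bound A : 0 < A < 1 -> 0 <= - ln A * A <= 2 * sqrt A.
Proof.
  intros HA. assert (Hu : 0 < sqrt A) by (apply sqrt_lt_R0; lra).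
  assert (HAu : A = sqrt A * sqrt A) by (rewrite sqrt_sqrt; lra).
  assert (HlnA : ln A < 0) by (rewrite <- ln_1; apply ln_increasing; lra).
  split. nra.
  rewrite HAu at 1 2. rewrite ln_mult by auto.
  assert (H := ln_le_xm1 (/ sqrt A) (Rinv_0_lt_compat _ Hu)).
  rewrite ln_Rinv in H by auto.
  assert (/ sqrt A * sqrt A = 1) by (field; lra).
  nra.
Qed.

Lemma main_bound n A B : (1 <= n)%nat -> 0 < A < 1 -> 1 <= B -> B <= INR n ->
  Rabs (Iab A B - (Hn n - ln (INR n))) <= 2 * sqrt A + A + B / INR n + 5 / B.
Proof.
  intros Hn HA HB HBm.
  rewrite step1 by lra. rewrite (step2 n) by (auto; lra).
  rewrite (step3 n A B Hn), (step4 n B) by (auto; lra).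
  set (J1 := RInt (fun t => (qf n t - exp (- t)) / t) A B).
  set (J3 := RInt (fun t => qf n t / t) B (INR n)).
  set (J2 := RInt (Pf n) 0 A).
  assert (H1 := J1_bound n A B Hn (proj1 HA) ltac:(lra) HBm). fold J1 in H1.
  assert (H2 := J2_bound n A Hn (proj1 HA) ltac:(lra)). fold J2 in H2.
  assert (H3 := J3_bound n B Hn HB HBm). fold J3 in H3.
  assert (H4 := xlnx_bound A HA).
  assert (H5 : 0 <= 1 - exp (- A) <= A).
  { generalize (exp_ineq1_le (- A)); intro. split; [|lra].
    assert (exp (- A) <= 1) by (rewrite <- exp_0; left; apply exp_increasing; lra). lra. }
  assert (H6 : 0 <= ln B * exp (- B) <= 4 / B).
  { assert (0 <= ln B) by (rewrite <- ln_1; apply ln_le; lra).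
    assert (ln B <= B) by (generalize (ln_le_xm1 B ltac:(lra)); lra).
    generalize (exp_sq_bound B ltac:(lra)) (exp_pos B); intros.
    rewrite exp_Ropp. split. apply Rmult_le_pos; auto. left; apply Rinv_0_lt_compat; auto.
    apply Rle_trans with (B * / exp B). apply Rmult_le_compat_r; auto. left; apply Rinv_0_lt_compat; auto.
    apply (Rmult_le_reg_r (exp B * B)). nra.
    replace (B * / exp B * (exp B * B)) with (B * B) by (field; lra).
    replace (4 / B * (exp B * B)) with (4 * exp B) by (field; lra). auto. }
  assert (H7 : exp (- B) <= 1 / B).
  { rewrite exp_Ropp. generalize (exp_ineq1_le B) (exp_pos B); intros.
    unfold Rdiv. rewrite Rmult_1_l. apply Rinv_le_contravar; lra. }
  assert (H8 : 0 <= - ln A * (1 - exp (- A)) <= 2 * sqrt A).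
  { assert (ln A < 0) by (rewrite <- ln_1; apply ln_increasing; lra). nra. }
  assert (E : RInt (Pf n) A B + J1 - (ln B * (1 - exp (- B)) - ln A * (1 - exp (- A))) -
     (J2 + RInt (Pf n) A B + (ln (INR n) - ln B - J3) - ln (INR n)) =
     J1 + ln B * exp (- B) + ln A * (1 - exp (- A)) - J2 + J3) by ring.
  rewrite E. apply Rabs_le. apply Rabs_le_between in H1.
  assert (0 <= B / INR n) by (apply Rdiv_le_0_compat; lra).
  assert (0 < 5 / B) by (apply Rdiv_lt_0_compat; lra).
  assert (4 / B + 1 / B = 5 / B) by (field; lra).
  split; lra.
Qed.

Lemma nat_unbounded X : exists N : nat, X < INR N.
Proof.
  destruct (archimed (Rabs X)) as [H1 _].
  assert (Hz : (0 <= up (Rabs X))%Z).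
  { apply le_IZR. generalize (Rabs_pos X). simpl. lra. }
  exists (Z.to_nat (up (Rabs X))). rewrite INR_IZR_INZ, Z2Nat.id by auto.
  generalize (Rle_abs X). lra.
Qed.

Definition gseq (n : nat) := sum_f_R0 (fun k => / INR (S k)) n - ln (INR (S n)).

Lemma gseq_bound n A B : 0 < A < 1 -> 1 <= B -> B <= INR (S n) ->
  Rabs (Iab A B - gseq n) <= 2 * sqrt A + A + B / INR (S n) + 5 / B.
Proof.
  intros. apply (main_bound (S n) A B); auto. lia.
Qed.

Lemma gseq_cauchy : ex_lim_seq_cauchy gseq.
Proof.
  intros [e He]. simpl.
  set (u := Rmin (1/2) (e / 16)).
  assert (Hu : 0 < u <= 1/2 /\ u <= e / 16).
  { unfold u. split. split. apply Rmin_glb_lt; lra. apply Rmin_l. apply Rmin_r. }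
  set (A := u * u). set (B := 1 + 40 / e).
  assert (HA : 0 < A < 1) by (unfold A; split; nra).
  assert (HsA : sqrt A = u) by (unfold A; apply sqrt_square; lra).
  assert (HB : 1 <= B) by (unfold B; assert (0 < 40 / e) by (apply Rdiv_lt_0_compat; lra); lra).
  assert (HB5 : 5 / B <= e / 8).
  { assert (0 < 40 / e) by (apply Rdiv_lt_0_compat; lra).
    apply Rle_trans with (5 / (40 / e)).
    unfold Rdiv at 1 2. apply Rmult_le_compat_l. lra. apply Rinv_le_contravar; auto. unfold B; lra.
    right. field. lra. }
  destruct (nat_unbounded (B + 16 * B / e)) as [N HN].
  exists N. intros n m Hn Hm.
  assert (Hk : forall k, (N <= k)%nat -> B <= INR (S k) /\ B / INR (S k) <= e / 16).
  { intros k Hk. assert (INR N <= INR (S k)) by (apply le_INR; lia).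
    assert (0 < 16 * B / e) by (apply Rdiv_lt_0_compat; lra).
    split. lra.
    apply (Rmult_le_reg_r (INR (S k) * 16 / e)). apply Rdiv_lt_0_compat; lra.
    replace (B / INR (S k) * (INR (S k) * 16 / e)) with (16 * B / e) by (field; split; lra).
    replace (e / 16 * (INR (S k) * 16 / e)) with (INR (S k)) by (field; lra). lra. }
  destruct (Hk n Hn) as [Hn1 Hn2]. destruct (Hk m Hm) as [Hm1 Hm2].
  assert (B1 := gseq_bound n A B HA HB Hn1). assert (B2 := gseq_bound m A B HA HB Hm1).
  rewrite HsA in B1, B2.
  apply Rabs_le_between in B1. apply Rabs_le_between in B2.
  assert (A <= u / 2) by (unfold A; nra).
  apply Rabs_def1; lra.
Qed.

Lemma gamma_lim : is_lim_seq gseq euler_gamma.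
Proof.
  assert (H := proj2 (ex_lim_seq_cauchy_corr gseq) gseq_cauchy).
  destruct H as [l Hl].
  unfold euler_gamma. fold gseq. rewrite (is_lim_seq_unique _ _ Hl). simpl. auto.
Qed.

Lemma Iab_gamma A B : 0 < A < 1 -> 1 <= B ->
  Rabs (Iab A B - euler_gamma) <= 2 * sqrt A + A + 5 / B.
Proof.
  intros HA HB. apply Rle_plus_epsilon. intros eta Heta.
  assert (Hl := proj1 (is_lim_seq_Reals _ _) gamma_lim (eta / 2) ltac:(lra)).
  destruct Hl as [N1 HN1].
  destruct (nat_unbounded (B + 2 * B / eta)) as [N2 HN2].
  set (n := (N1 + N2)%nat).
  assert (H1 := HN1 n ltac:(unfold n; lia)). unfold R_dist in H1.
  assert (HS : INR N2 <= INR (S n)) by (apply le_INR; unfold n; lia).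
  assert (0 < 2 * B / eta) by (apply Rdiv_lt_0_compat; lra).
  assert (HBn : B <= INR (S n)) by lra.
  assert (HBe : B / INR (S n) <= eta / 2).
  { apply (Rmult_le_reg_r (INR (S n) * 2 / eta)). apply Rdiv_lt_0_compat; lra.
    replace (B / INR (S n) * (INR (S n) * 2 / eta)) with (2 * B / eta) by (field; split; lra).
    replace (eta / 2 * (INR (S n) * 2 / eta)) with (INR (S n)) by (field; lra). lra. }
  assert (H2 := gseq_bound n A B HA HB HBn).
  apply Rabs_le_between in H2.
  apply Rabs_le. apply Rabs_lt_between in H1. lra.
Qed.

Lemma gen_of_fin (f : R -> R) l :
  (forall a b, a <= b -> ex_RInt f a b) ->
  (forall eps, 0 < eps -> exists M, forall a b, a < - M -> M < b -> Rabs (RInt f a b - l) < eps) ->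
  is_RInt_gen f (Rbar_locally m_infty) (Rbar_locally p_infty) l.
Proof.
  intros Hex Hlim. unfold is_RInt_gen, filterlimi, filter_le, filtermapi.
  intros P [eps HP].
  destruct (Hlim eps (cond_pos eps)) as [M HM].
  set (M' := Rabs M).
  apply (Filter_prod _ _ _ (fun a => a < - M') (fun b => M' < b)).
  - exists (- M'). auto.
  - exists M'. auto.
  - intros x y Hx Hy. simpl. exists (RInt f x y). split.
    + apply (RInt_correct f x y). apply Hex. unfold M' in *. generalize (Rabs_pos M). lra.
    + apply HP. generalize (HM x y). unfold M' in *. intros H.
      assert (Rabs (RInt f x y - l) < eps).
      { apply H. generalize (Rle_abs M) (Rabs_pos M). lra. generalize (Rle_abs M). lra. }
      unfold ball; simpl; unfold AbsRing_ball; simpl. unfold abs, minus, plus, opp; simpl. exact H0.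
Qed.

Definition gT (L x : R) := exp (- (x - L + euler_gamma)).

Lemma pdf_eq L x : gumbel_pdf (x - L) = gT L x * exp (- gT L x).
Proof. unfold gumbel_pdf, gumbel_cdf, gT. reflexivity. Qed.

Lemma fin_pdf L a b : RInt (fun x => gumbel_pdf (x - L)) a b = exp (- gT L b) - exp (- gT L a).
Proof.
  apply is_RInt_unique.
  apply (is_RInt_derive (fun x => exp (- gT L x))).
  - intros x _. unfold gT. auto_derive. auto. rewrite pdf_eq. unfold gT. req. unfold Rminus. ring.
  - intros x _. apply cont_R. unfold gumbel_pdf, gumbel_cdf. auto_derive. auto.
Qed.

Lemma ex_pdf L a b : ex_RInt (fun x => gumbel_pdf (x - L)) a b.
Proof. apply exRI_all. intros t. unfold gumbel_pdf, gumbel_cdf. auto_derive. auto. Qed.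

Lemma ex_xpdf L a b : ex_RInt (fun x => x * gumbel_pdf (x - L)) a b.
Proof. apply exRI_all. intros t. unfold gumbel_pdf, gumbel_cdf. auto_derive. auto. Qed.

Lemma exRI_posend (f : R -> R) a b : 0 < a -> 0 < b -> (forall t, 0 < t -> ex_derive f t) -> ex_RInt f a b.
Proof.
  intros Ha Hb H. apply exRI_cont. intros z Hz. apply cont_R, H.
  assert (0 < Rmin a b) by (apply Rmin_glb_lt; auto). lra.
Qed.

Lemma RInt_scal' (g : R -> R) k a b : ex_RInt g a b -> RInt (fun x => k * g x) a b = k * RInt g a b.
Proof. intros H. apply (RInt_scal g a b k H). Qed.

Lemma RInt_expm a b : RInt (fun t => exp (- t)) a b = exp (- a) - exp (- b).
Proof.
  apply is_RInt_unique.
  replace (exp (- a) - exp (- b)) with (- exp (- b) - - exp (- a)) by ring.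
  apply (is_RInt_derive (fun t => - exp (- t))).
  intros x _. auto_derive. auto. ring. intros x _. apply cont_R. auto_derive. auto.
Qed.

Lemma fin_mean L a b :
  RInt (fun x => x * gumbel_pdf (x - L)) a b =
  (L - euler_gamma) * (exp (- gT L b) - exp (- gT L a)) + Iab (gT L b) (gT L a).
Proof.
  set (c := L - euler_gamma).
  assert (E1 : RInt (fun x => x * gumbel_pdf (x - L)) a b =
    RInt (fun y => scal (- gT L y) ((fun t => - ((c - ln t) * exp (- t))) (gT L y))) a b).
  { apply RInt_ext. intros x _. rewrite pdf_eq. unfold scal; simpl; unfold mult; simpl.
    replace (ln (gT L x)) with (- (x - L + euler_gamma)) by (unfold gT; rewrite ln_exp; reflexivity).
    unfold c. req. ring. }
  rewrite E1. rewrite (RInt_comp (fun t => - ((c - ln t) * exp (- t))) (gT L) (fun y => - gT L y)).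
  - assert (Ha : 0 < gT L a) by (unfold gT; apply exp_pos).
    assert (Hb : 0 < gT L b) by (unfold gT; apply exp_pos).
    rewrite <- (opp_RInt_swap (fun t => - ((c - ln t) * exp (- t)))).
    2: { apply exRI_posend; auto. intros t Ht. auto_derive. auto. }
    assert (E2 : RInt (fun t => - ((c - ln t) * exp (- t))) (gT L b) (gT L a) =
      RInt (fun t => (- c) * exp (- t)) (gT L b) (gT L a) - Iab (gT L b) (gT L a)).
    { unfold Iab. rewrite <- RInt_minus'. apply RInt_ext. intros x _. req. ring.
      apply exRI_all. intros t. auto_derive. auto.
      apply exRI_posend; auto. intros t Ht. auto_derive. auto. }
    rewrite E2, RInt_scal', RInt_expm. unfold opp; simpl. ring.
    apply exRI_all. intros t. auto_derive. auto.
  - intros x _. apply cont_R. auto_derive. unfold gT; apply exp_pos.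
  - intros x _. split. unfold gT. auto_derive. auto. req. unfold Rminus. ring.
    apply cont_R. unfold gT. auto_derive. auto.
Qed.

Lemma gT_small L eta : 0 < eta -> exists M, forall b, M < b -> gT L b < eta.
Proof.
  intros He. exists (Rabs (L - euler_gamma - ln eta)). intros b Hb.
  unfold gT. rewrite <- (exp_ln eta He). apply exp_increasing.
  generalize (Rle_abs (L - euler_gamma - ln eta)). lra.
Qed.

Lemma gT_large L T : 0 < T -> exists M, forall a, a < - M -> T < gT L a.
Proof.
  intros He. exists (Rabs (L - euler_gamma - ln T)). intros a Ha.
  unfold gT. rewrite <- (exp_ln T He). apply exp_increasing.
  generalize (Rle_abs (- (L - euler_gamma - ln T))). rewrite Rabs_Ropp. lra.
Qed.

Lemma em_bounds t : 0 < t -> 0 <= 1 - exp (- t) <= t /\ 0 < exp (- t) <= 1 / t.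
Proof.
  intros Ht. generalize (exp_ineq1_le (- t)) (exp_pos (- t)); intros H1 H2.
  assert (exp (- t) <= 1) by (rewrite <- exp_0; left; apply exp_increasing; lra).
  split. lra. split. auto.
  rewrite exp_Ropp. generalize (exp_ineq1_le t) (exp_pos t); intros.
  unfold Rdiv. rewrite Rmult_1_l. apply Rinv_le_contravar; lra.
Qed.

Lemma tails (P : R -> R -> Prop) L :
  (forall u T, 0 < u < 1/2 -> 1 <= T -> exists M, forall a b, a < - M -> M < b ->
     gT L b < u * u /\ T < gT L a).
Proof.
  intros u T Hu HT.
  destruct (gT_small L (u * u)) as [M1 H1]. nra.
  destruct (gT_large L T) as [M2 H2]. lra.
  exists (Rmax (Rabs M1) (Rabs M2)). intros a b Ha Hb. split.
  apply H1. generalize (Rle_abs M1) (Rmax_l (Rabs M1) (Rabs M2)). lra.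
  apply H2. generalize (Rle_abs M2) (Rmax_r (Rabs M1) (Rabs M2)) (Rle_abs (- M2)). rewrite Rabs_Ropp. lra.
Qed.

Lemma gen_mean L : is_RInt_gen (fun x => x * gumbel_pdf (x - L)) (Rbar_locally m_infty) (Rbar_locally p_infty) L.
Proof.
  apply gen_of_fin. intros; apply ex_xpdf.
  intros eps He. set (K := Rabs (L - euler_gamma)).
  assert (HK : 0 <= K) by apply Rabs_pos.
  set (u := Rmin (1/4) (eps / (4 * (K + 3)))).
  assert (Hu : 0 < u <= 1/4 /\ u <= eps / (4 * (K + 3))).
  { unfold u. split. split. apply Rmin_glb_lt. lra. apply Rdiv_lt_0_compat; lra. apply Rmin_l. apply Rmin_r. }
  set (T := 4 * (K + 5) / eps + 1).
  assert (HT : 1 <= T) by (unfold T; assert (0 < 4 * (K + 5) / eps) by (apply Rdiv_lt_0_compat; lra); lra).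
  destruct (tails (fun _ _ => True) L u T ltac:(lra) HT) as [M HM].
  exists M. intros a b Ha Hb. destruct (HM a b Ha Hb) as [Htb Hta].
  rewrite fin_mean. set (tb := gT L b) in *. set (ta := gT L a) in *.
  assert (Htb0 : 0 < tb) by (unfold tb, gT; apply exp_pos).
  assert (Hsq : sqrt tb < u).
  { rewrite <- (sqrt_square u) by lra. apply sqrt_lt_1_alt. lra. }
  assert (Htbu : tb < u) by nra.
  assert (HI := Iab_gamma tb ta ltac:(nra) ltac:(lra)).
  destruct (em_bounds tb Htb0) as [[E1 E2] _].
  destruct (em_bounds ta ltac:(lra)) as [_ [E3 E4]].
  assert (HKd : (K + 3) * u <= eps / 4).
  { apply Rle_trans with ((K + 3) * (eps / (4 * (K + 3)))). apply Rmult_le_compat_l; lra.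
    right; field; lra. }
  assert (HTd : (K + 5) / ta < eps / 4).
  { apply (Rmult_lt_reg_r ta). lra. replace ((K + 5) / ta * ta) with (K + 5) by (field; lra).
    unfold T in Hta. apply Rle_lt_trans with (eps / 4 * (4 * (K + 5) / eps)).
    right; field; lra. apply Rmult_lt_compat_l; lra. }
  assert (HX : (L - euler_gamma) * (exp (- tb) - exp (- ta)) + Iab tb ta - L =
     - (L - euler_gamma) * (1 - exp (- tb)) - (L - euler_gamma) * exp (- ta) + (Iab tb ta - euler_gamma)) by ring.
  rewrite HX.
  apply Rle_lt_trans with (K * tb + K * (1 / ta) + (2 * sqrt tb + tb + 5 / ta)).
  - apply Rle_trans with (Rabs (- (L - euler_gamma) * (1 - exp (- tb))) + Rabs ((L - euler_gamma) * exp (- ta)) + Rabs (Iab tb ta - euler_gamma)).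
    + unfold Rminus at 1. eapply Rle_trans. apply Rabs_triang. apply Rplus_le_compat_r.
      rewrite <- Rabs_Ropp with (x := (L - euler_gamma) * exp (- ta)). apply Rabs_triang.
    + apply Rplus_le_compat. apply Rplus_le_compat.
      rewrite Rabs_mult, Rabs_Ropp, (Rabs_pos_eq (1 - _)) by lra. apply Rmult_le_compat_l; auto.
      rewrite Rabs_mult, (Rabs_pos_eq (exp _)) by lra. apply Rmult_le_compat_l; auto. auto.
  - assert (E5 : 5 / ta = 5 * (1 / ta)) by (field; lra).
    assert (E6 : (K + 5) / ta = (K + 5) * (1 / ta)) by (field; lra).
    assert (0 <= K * tb) by nra.
    nra.
Qed.

Lemma gen_pdf L : is_RInt_gen (fun x => gumbel_pdf (x - L)) (Rbar_locally m_infty) (Rbar_locally p_infty) 1.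
Proof.
  apply gen_of_fin. intros; apply ex_pdf.
  intros eps He.
  set (u := Rmin (1/4) (eps / 4)).
  assert (Hu : 0 < u <= 1/4 /\ u <= eps / 4).
  { unfold u. split. split. apply Rmin_glb_lt; lra. apply Rmin_l. apply Rmin_r. }
  set (T := 4 / eps + 1).
  assert (HT : 1 <= T) by (unfold T; assert (0 < 4 / eps) by (apply Rdiv_lt_0_compat; lra); lra).
  destruct (tails (fun _ _ => True) L u T ltac:(lra) HT) as [M HM].
  exists M. intros a b Ha Hb. destruct (HM a b Ha Hb) as [Htb Hta].
  rewrite fin_pdf. set (tb := gT L b) in *. set (ta := gT L a) in *.
  assert (Htb0 : 0 < tb) by (unfold tb, gT; apply exp_pos).
  assert (Htbu : tb < u) by nra.
  destruct (em_bounds tb Htb0) as [[E1 E2] _].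
  destruct (em_bounds ta ltac:(lra)) as [_ [E3 E4]].
  assert (HTd : 1 / ta < eps / 4).
  { apply (Rmult_lt_reg_r ta). lra. replace (1 / ta * ta) with 1 by (field; lra).
    unfold T in Hta. apply Rle_lt_trans with (eps / 4 * (4 / eps)).
    right; field; lra. apply Rmult_lt_compat_l; lra. }
  apply Rabs_def1; lra.
Qed.

Lemma shift_exp x y : exp (- (x - y + euler_gamma)) = exp y * exp (- (x + euler_gamma)).
Proof. rewrite <- exp_plus. f_equal. ring. Qed.

Lemma triple_eq' a b c x S : S = exp a + exp b + exp c ->
  gumbel_pdf (x - a) * gumbel_cdf (x - b) * gumbel_cdf (x - c) =
  exp a / S * gumbel_pdf (x - ln S).
Proof.
  intros HSd. assert (HS : 0 < S) by (rewrite HSd; generalize (exp_pos a) (exp_pos b) (exp_pos c); lra).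
  unfold gumbel_pdf, gumbel_cdf. 
  rewrite (shift_exp x a), (shift_exp x b), (shift_exp x c), (shift_exp x (ln S)). 
  rewrite exp_ln by auto.
  set (u := exp (- (x + euler_gamma))).
  replace (exp (- (S * u))) with (exp (- (exp a * u)) * exp (- (exp b * u)) * exp (- (exp c * u))).
  
  clearbody u. generalize (exp (- (exp a * u))) (exp (- (exp b * u))) (exp (- (exp c * u))). intros. field. lra.
  rewrite <- !exp_plus. f_equal. rewrite HSd. ring.
Qed.

Lemma triple_eq a b c x :
  gumbel_pdf (x - a) * gumbel_cdf (x - b) * gumbel_cdf (x - c) =
  exp a / (exp a + exp b + exp c) * gumbel_pdf (x - ln (exp a + exp b + exp c)).
Proof. apply triple_eq'. reflexivity. Qed.

Lemma sum3_eq a b c x :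
  gumbel_pdf (x - a) * gumbel_cdf (x - b) * gumbel_cdf (x - c)
   + gumbel_pdf (x - b) * gumbel_cdf (x - a) * gumbel_cdf (x - c)
   + gumbel_pdf (x - c) * gumbel_cdf (x - a) * gumbel_cdf (x - b) =
  gumbel_pdf (x - ln (exp a + exp b + exp c)).
Proof.
  set (S := exp a + exp b + exp c).
  assert (HS : 0 < S) by (unfold S; generalize (exp_pos a) (exp_pos b) (exp_pos c); lra).
  rewrite (triple_eq' a b c x S) by reflexivity.
  rewrite (triple_eq' b a c x S) by (unfold S; ring).
  rewrite (triple_eq' c a b x S) by (unfold S; ring).
  set (P := gumbel_pdf (x - ln S)).
  assert (HSd : exp a + exp b + exp c = S) by reflexivity.
  clearbody P S.
  transitivity ((exp a + exp b + exp c) / S * P). field; lra.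
  rewrite HSd. field; lra.
Qed.

Lemma win3_eq a b c : win3 a b c = exp a / (exp a + exp b + exp c).
Proof.
  unfold win3, integral_R. apply is_RInt_gen_unique.
  set (k := exp a / (exp a + exp b + exp c)).
  set (L := ln (exp a + exp b + exp c)).
  
  refine (@is_RInt_gen_ext R_NormedModule (Rbar_locally m_infty) (Rbar_locally p_infty) (Rbar_locally_filter _).(filter_filter) (Rbar_locally_filter _).(filter_filter) (fun x => scal k (gumbel_pdf (x - L))) _ _ _ _).
  - apply Filter_prod with (fun _ => True) (fun _ => True).
    exists 0; auto. exists 0; auto.
    intros x y _ _ z _.  unfold k, L. rewrite triple_eq. reflexivity.
  - 
    assert (H := @is_RInt_gen_scal R_NormedModule _ _ (Rbar_locally_filter _).(filter_filter) (Rbar_locally_filter _).(filter_filter) (fun x => gumbel_pdf (x - L)) k 1 (gen_pdf L)).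
    
    assert (E : @scal R_Ring (NormedModule.ModuleSpace R_AbsRing R_NormedModule) k 1 = k).
    { change (k * 1 = k). ring. }
    rewrite E in H. exact H.
Qed.

Lemma emax3_eq a b c : emax3 a b c = ln (exp a + exp b + exp c).
Proof.
  unfold emax3, integral_R. apply is_RInt_gen_unique.
  set (L := ln (exp a + exp b + exp c)).
  refine (@is_RInt_gen_ext R_NormedModule (Rbar_locally m_infty) (Rbar_locally p_infty) (Rbar_locally_filter _).(filter_filter) (Rbar_locally_filter _).(filter_filter) (fun x => x * gumbel_pdf (x - L)) _ _ _ _).
  - apply Filter_prod with (fun _ => True) (fun _ => True).
    exists 0; auto. exists 0; auto.
    intros x y _ _ z _. unfold L. rewrite sum3_eq. reflexivity.
  - apply gen_mean.
Qed.

Section PE.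
Variables (p VP vN : R).
Let w1 := win3 vN 0 VP.
Let w2 := win3 VP 0 vN + win3 0 VP vN.

Lemma w_facts : 0 <= w1 /\ 0 <= w2 /\ w1 + w2 = 1.
Proof.
  unfold w1, w2. rewrite !win3_eq, exp_0.
  generalize (exp_pos vN) (exp_pos VP); intros.
  split. apply Rdiv_le_0_compat; lra. split.
  apply Rplus_le_le_0_compat; apply Rdiv_le_0_compat; lra.
  field. lra.
Qed.

Lemma pe_bound (f : nat -> nat -> R) m M :
  (forall a b, m <= f a b <= M) -> forall t a b, m <= pear_exp p VP vN t f a b <= M.
Proof.
  intros Hf t. destruct w_facts as [H1 [H2 H3]].
  induction t as [|t IH]; intros a b; simpl. apply Hf.
  destruct (pear_explore p VP a b). fold w1 w2.
  destruct (IH (S a) b) as [A1 A2]. destruct (IH a (S b)) as [B1 B2]. nra.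
  apply IH.
Qed.

Lemma pe_frozen (f : nat -> nat -> R) a b : pear_explore p VP a b = false ->
  forall t, pear_exp p VP vN t f a b = f a b.
Proof. intros H t. induction t as [|t IH]; simpl. auto. rewrite H. auto. Qed.

Lemma pe_nonneg (f : nat -> nat -> R) : (forall a b, 0 <= f a b) ->
  forall t a b, 0 <= pear_exp p VP vN t f a b.
Proof.
  intros Hf t. destruct w_facts as [H1 [H2 H3]].
  induction t as [|t IH]; intros a b; simpl. apply Hf.
  destruct (pear_explore p VP a b). fold w1 w2.
  generalize (IH (S a) b) (IH a (S b)). nra. apply IH.
Qed.

Lemma pe_lower (f : nat -> nat -> R) U : (forall a b, 0 <= f a b) -> (forall a, U <= f a 0%nat) ->
  (forall a, pear_explore p VP a 0%nat = true) ->
  forall t a, w1 ^ t * U <= pear_exp p VP vN t f a 0%nat.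
Proof.
  intros Hf HU Hex t. destruct w_facts as [H1 [H2 H3]].
  induction t as [|t IH]; intros a; simpl. rewrite Rmult_1_l. apply HU.
  rewrite Hex. fold w1 w2.
  generalize (IH (S a)) (pe_nonneg f Hf t a 1%nat). nra.
Qed.

Lemma pe_ideal (f : nat -> nat -> R) N E X : (forall a, f a 0%nat = E) ->
  (forall a, (a < N)%nat -> pear_explore p VP a 1%nat = false /\ f a 1%nat = X) ->
  (forall a, pear_explore p VP a 0%nat = true) ->
  forall t a, (a + t <= N)%nat -> pear_exp p VP vN t f a 0%nat = w1 ^ t * E + (1 - w1 ^ t) * X.
Proof.
  intros HE HX Hex t. destruct w_facts as [H1 [H2 H3]].
  induction t as [|t IH]; intros a Ha; simpl. rewrite HE. ring.
  rewrite Hex. fold w1 w2.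
  rewrite IH by lia. destruct (HX a ltac:(lia)) as [Hf Hv].
  rewrite pe_frozen by auto. rewrite Hv.
  replace w2 with (1 - w1) by lra. ring.
Qed.
End PE.

Lemma rho_props p VP : 0 < p < 1 -> 0 < rho2 VP /\ rho2 VP < rho1 p VP /\ rho1 p VP < 1.
Proof.
  intros Hp. unfold rho1, rho2.
  assert (Hk : -1 < (1 - p) / p) by (assert (0 < (1 - p) / p) by (apply Rdiv_lt_0_compat; lra); lra).
  generalize (exp_increasing _ _ Hk) (exp_pos (-1)) (exp_pos VP) (exp_pos ((1 - p) / p)).
  set (e1 := exp (-1)). set (ek := exp ((1 - p) / p)). set (C := 1 + exp VP). intros.
  replace (1 + exp VP + e1) with (C + e1) by (unfold C; ring).
  replace (1 + exp VP + ek) with (C + ek) by (unfold C; ring).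
  assert (0 < C) by (unfold C; lra).
  split. apply Rdiv_lt_0_compat; lra. split.
  apply (Rmult_lt_reg_r ((C + e1) * (C + ek))). nra.
  replace (e1 / (C + e1) * ((C + e1) * (C + ek))) with (e1 * (C + ek)) by (field; lra).
  replace (ek / (C + ek) * ((C + e1) * (C + ek))) with (ek * (C + e1)) by (field; lra). nra.
  apply (Rmult_lt_reg_r (C + ek)). lra. replace (ek / (C + ek) * (C + ek)) with ek by (field; lra). lra.
Qed.

Lemma post_ge p VP a b : 0 < p < 1 ->
  (rho2 VP ^ a * (1 - rho2 VP) ^ b) / (rho1 p VP ^ a * (1 - rho1 p VP) ^ b) <= 1 ->
  pear_explore p VP a b = true.
Proof.
  intros Hp HR. unfold pear_explore. destruct (Rle_dec p (pear_post p VP a b)) as [H|H]; auto.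
  exfalso. apply H. unfold pear_post.
  set (R0 := (rho2 VP ^ a * (1 - rho2 VP) ^ b) / (rho1 p VP ^ a * (1 - rho1 p VP) ^ b)) in *.
  destruct (rho_props p VP Hp) as [H1 [H2 H3]].
  assert (HR0 : 0 <= R0).
  { unfold R0. apply Rdiv_le_0_compat. apply Rmult_le_pos; apply pow_le; lra.
    apply Rmult_lt_0_compat; apply pow_lt; lra. }
  assert (Hk : 0 < (1 - p) / p) by (apply Rdiv_lt_0_compat; lra).
  replace p with (/ (1 + (1 - p) / p)) at 1 by (field; lra).
  apply Rinv_le_contravar. nra. nra.
Qed.

Lemma post_lt p VP a b : 0 < p < 1 ->
  1 < (rho2 VP ^ a * (1 - rho2 VP) ^ b) / (rho1 p VP ^ a * (1 - rho1 p VP) ^ b) ->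
  pear_explore p VP a b = false.
Proof.
  intros Hp HR. unfold pear_explore. destruct (Rle_dec p (pear_post p VP a b)) as [H|H]; auto.
  exfalso. revert H. apply Rlt_not_le. unfold pear_post.
  set (R0 := (rho2 VP ^ a * (1 - rho2 VP) ^ b) / (rho1 p VP ^ a * (1 - rho1 p VP) ^ b)) in *.
  assert (Hk : 0 < (1 - p) / p) by (apply Rdiv_lt_0_compat; lra).
  replace p with (/ (1 + (1 - p) / p)) at 3 by (field; lra).
  assert (0 < (1 - p) / p * R0) by (apply Rmult_lt_0_compat; lra).
  apply Rinv_lt_contravar. apply Rmult_lt_0_compat; lra. nra.
Qed.

Lemma explore_0 p VP a : 0 < p < 1 -> pear_explore p VP a 0 = true.
Proof.
  intros Hp. apply post_ge; auto. simpl. rewrite !Rmult_1_r.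
  destruct (rho_props p VP Hp) as [H1 [H2 H3]].
  assert (0 < rho1 p VP ^ a) by (apply pow_lt; lra).
  apply (Rmult_le_reg_r (rho1 p VP ^ a)); auto. unfold Rdiv.
  rewrite Rmult_assoc, Rinv_l, Rmult_1_r, Rmult_1_l by lra.
  apply pow_incr; lra.
Qed.

Lemma explore_1 p VP a : 0 < p < 1 -> 1 - rho1 p VP < rho2 VP ^ a * (1 - rho2 VP) ->
  pear_explore p VP a 1 = false.
Proof.
  intros Hp Hc. apply post_lt; auto. simpl. rewrite !Rmult_1_r.
  destruct (rho_props p VP Hp) as [H1 [H2 H3]].
  assert (0 < rho1 p VP ^ a) by (apply pow_lt; lra).
  assert (rho1 p VP ^ a <= 1) by (apply pow_le1; lra).
  assert (0 < rho1 p VP ^ a * (1 - rho1 p VP)) by (apply Rmult_lt_0_compat; lra).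
  apply (Rmult_lt_reg_r (rho1 p VP ^ a * (1 - rho1 p VP))); auto. unfold Rdiv.
  rewrite Rmult_assoc, Rinv_l, Rmult_1_r, Rmult_1_l by lra. nra.
Qed.

Lemma isR_plus (a b : nat -> R) la lb : is_series a la -> is_series b lb ->
  is_series (fun n => a n + b n) (la + lb).
Proof. intros H1 H2. exact (@is_series_plus R_AbsRing R_NormedModule a b la lb H1 H2). Qed.

Lemma isR_scal (a : nat -> R) c l : is_series a l -> is_series (fun n => c * a n) (c * l).
Proof. intros H. exact (@is_series_scal_l R_AbsRing R_NormedModule c a l H). Qed.

Lemma isR_ext (a b : nat -> R) l : (forall n, a n = b n) -> is_series a l -> is_series b l.
Proof. intros. exact (@is_series_ext R_AbsRing R_NormedModule a b l H H0). Qed.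

Lemma exR_le (a b : nat -> R) : (forall n, Rabs (a n) <= b n) -> ex_series b -> ex_series a.
Proof. intros H1 H2. exact (@ex_series_le R_AbsRing R_CompleteNormedModule a b H1 H2). Qed.

Lemma geom_is q : 0 <= q < 1 -> is_series (fun n => q ^ n) (/ (1 - q)).
Proof. intros. apply is_series_geom. rewrite Rabs_pos_eq; lra. Qed.

Lemma ser_abs_le (d b : nat -> R) B : (forall t, Rabs (d t) <= b t) -> is_series b B ->
  Rabs (Series d) <= B.
Proof.
  intros H Hb.
  assert (Eb : ex_series b) by (exists B; auto).
  assert (Ed : ex_series (fun t => Rabs (d t))).
  { apply (exR_le _ b); auto. intros n. rewrite Rabs_Rabsolu. auto. }
  eapply Rle_trans. apply Series_Rabs; auto.
  rewrite <- (is_series_unique b B Hb). apply Series_le; auto.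
  intros n; split. apply Rabs_pos. auto.
Qed.

Lemma ex_bounded (d : R) (y : nat -> R) M : 0 <= d < 1 -> (forall t, Rabs (y t) <= M) ->
  ex_series (fun t => d ^ t * y t).
Proof.
  intros Hd Hy. apply (exR_le _ (fun t => M * d ^ t)).
  intros n. rewrite Rabs_mult, Rabs_pos_eq by (apply pow_le; lra).
  rewrite Rmult_comm. apply Rmult_le_compat_r. apply pow_le; lra. auto.
  exists (M * / (1 - d)). apply isR_scal. apply geom_is; auto.
Qed.

Lemma Series_minus' (a b : nat -> R) : ex_series a -> ex_series b ->
  Series a - Series b = Series (fun n => a n - b n).
Proof.
  intros [la Ha] [lb Hb]. rewrite (is_series_unique _ _ Ha), (is_series_unique _ _ Hb).
  symmetry. apply is_series_unique.
  apply (isR_ext (fun n => a n + (-1) * b n)). intros; ring.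
  replace (la - lb) with (la + (-1) * lb) by ring. apply isR_plus; auto. apply isR_scal; auto.
Qed.

Lemma ser_close (d : R) (y z : nat -> R) N c M : 0 <= d < 1 ->
  (forall t, Rabs (y t) <= M /\ Rabs (z t) <= M) ->
  (forall t, (t <= N)%nat -> Rabs (y t - z t) <= c) ->
  Rabs (Series (fun t => d ^ t * y t) - Series (fun t => d ^ t * z t))
    <= c / (1 - d) + 2 * M * sqrt d ^ N / (1 - sqrt d).
Proof.
  intros Hd Hb Hc. set (s := sqrt d).
  assert (Hs : 0 <= s < 1).
  { unfold s. split. apply sqrt_pos. rewrite <- sqrt_1. apply sqrt_lt_1_alt. lra. }
  assert (Hss : s * s = d) by (unfold s; apply sqrt_sqrt; lra).
  assert (HM : 0 <= M) by (destruct (Hb 0%nat) as [H _]; generalize (Rabs_pos (y 0%nat)); lra).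
  assert (Hc0 : 0 <= c) by (generalize (Hc 0%nat (Nat.le_0_l N)) (Rabs_pos (y 0%nat - z 0%nat)); lra).
  rewrite Series_minus'.
  2: apply (ex_bounded d y M); auto; intros; apply Hb.
  2: apply (ex_bounded d z M); auto; intros; apply Hb.
  apply (ser_abs_le _ (fun t => c * d ^ t + 2 * M * s ^ N * s ^ t)).
  - intros t. replace (d ^ t * y t - d ^ t * z t) with (d ^ t * (y t - z t)) by ring.
    rewrite Rabs_mult, Rabs_pos_eq by (apply pow_le; lra).
    assert (0 <= s ^ t) by (apply pow_le; lra). assert (0 <= s ^ N) by (apply pow_le; lra).
    assert (0 <= d ^ t) by (apply pow_le; lra).
    destruct (Compare_dec.le_lt_dec t N) as [HtN|HtN].
    + specialize (Hc t HtN). assert (0 <= 2 * M * s ^ N * s ^ t) by (repeat apply Rmult_le_pos; lra).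
      rewrite (Rmult_comm c). assert (d ^ t * Rabs (y t - z t) <= d ^ t * c) by (apply Rmult_le_compat_l; lra). lra.
    + assert (Hyz : Rabs (y t - z t) <= 2 * M).
      { destruct (Hb t) as [Hy1 Hy2]. unfold Rminus. eapply Rle_trans. apply Rabs_triang.
        rewrite Rabs_Ropp. lra. }
      assert (Hdt : d ^ t <= s ^ N * s ^ t).
      { rewrite <- Hss, Rpow_mult_distr. apply Rmult_le_compat_r; auto.
        replace t with (N + (t - N))%nat by lia. rewrite pow_add.
        rewrite <- (Rmult_1_r (s ^ N)) at 2. apply Rmult_le_compat_l; auto.
        apply pow_le1; lra. }
      assert (0 <= c * d ^ t) by (apply Rmult_le_pos; lra).
      apply Rle_trans with (d ^ t * (2 * M)). apply Rmult_le_compat_l; auto.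
      apply Rle_trans with (s ^ N * s ^ t * (2 * M)). apply Rmult_le_compat_r; lra. nra.
  - apply isR_plus. unfold Rdiv. apply isR_scal. apply geom_is; auto.
    unfold Rdiv. apply isR_scal. apply geom_is; auto.
Qed.

Lemma w1_low VP : win3 (-1) 0 VP = rho2 VP.
Proof. rewrite win3_eq, exp_0. unfold rho2. f_equal. ring. Qed.

Lemma w1_high p VP : win3 ((1 - p) / p) 0 VP = rho1 p VP.
Proof. rewrite win3_eq, exp_0. unfold rho1. f_equal. ring. Qed.

Lemma one_minus_rho1 p VP : 0 < p < 1 -> 0 < 1 - rho1 p VP <= (1 + exp VP) * p.
Proof.
  intros Hp. destruct (rho_props p VP Hp) as [_ [_ H3]]. split. lra.
  unfold rho1. set (k := (1 - p) / p). set (C := 1 + exp VP).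
  generalize (exp_ineq1_le k) (exp_pos k) (exp_pos VP); intros.
  assert (Hk : 1 + k = / p) by (unfold k; field; lra).
  replace (1 + exp VP + exp k) with (C + exp k) by (unfold C; ring).
  assert (0 < C) by (unfold C; lra).
  replace (1 - exp k / (C + exp k)) with (C / (C + exp k)) by (field; lra).
  apply (Rmult_le_reg_r ((C + exp k) / p)). apply Rdiv_lt_0_compat; lra.
  replace (C / (C + exp k) * ((C + exp k) / p)) with (C * / p) by (field; lra).
  replace (C * p * ((C + exp k) / p)) with (C * (C + exp k)) by (field; lra).
  rewrite <- Hk. nra.
Qed.

Lemma pow_anti r a N : 0 <= r <= 1 -> (a <= N)%nat -> r ^ N <= r ^ a.
Proof.
  intros Hr Ha. replace N with (a + (N - a))%nat by lia. rewrite pow_add.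
  rewrite <- (Rmult_1_r (r ^ a)) at 2. apply Rmult_le_compat_l. apply pow_le; lra. apply pow_le1; lra.
Qed.

Section Low.
Variables (p VP d : R) (f : nat -> nat -> R) (E X : R) (N : nat).
Hypothesis Hp : 0 < p < 1.
Hypothesis Hf : forall a b, f a b = if pear_explore p VP a b then E else X.
Hypothesis HN : (1 + exp VP) * p < rho2 VP ^ N * (1 - rho2 VP).

Definition Zt (VP E X : R) (t : nat) := rho2 VP ^ t * E + (1 - rho2 VP ^ t) * X.

Lemma low_eq t : (t <= N)%nat -> pear_exp p VP (-1) t f 0 0 = Zt VP E X t.
Proof.
  intros Ht. destruct (rho_props p VP Hp) as [H1 [H2 H3]].
  unfold Zt. rewrite <- w1_low.
  apply (pe_ideal p VP (-1) f N E X).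
  - intros a. rewrite Hf, explore_0; auto.
  - intros a Ha. assert (Hf1 : pear_explore p VP a 1 = false).
    { apply explore_1; auto. destruct (one_minus_rho1 p VP Hp) as [_ B].
      assert (rho2 VP ^ N <= rho2 VP ^ a) by (apply pow_anti; lra || lia).
      assert (0 < 1 - rho2 VP) by lra. nra. }
    split; auto. rewrite Hf, Hf1. auto.
  - intros a. apply explore_0; auto.
  - lia.
Qed.

Lemma low_bounds t : Rabs (pear_exp p VP (-1) t f 0 0) <= Rabs E + Rabs X /\
                     Rabs (Zt VP E X t) <= Rabs E + Rabs X.
Proof.
  destruct (rho_props p VP Hp) as [H1 [H2 H3]].
  split.
  - apply Rabs_le. apply (pe_bound p VP (-1) f).
    intros a b. rewrite Hf. destruct (pear_explore p VP a b);
    generalize (Rabs_pos E) (Rabs_pos X) (Rle_abs E) (Rle_abs X) (Rle_abs (- E)) (Rle_abs (- X));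
    rewrite !Rabs_Ropp; intros; split; lra.
  - unfold Zt. assert (0 <= rho2 VP ^ t <= 1) by (split; [apply pow_le; lra|apply pow_le1; lra]).
    eapply Rle_trans. apply Rabs_triang. rewrite !Rabs_mult, (Rabs_pos_eq (rho2 VP ^ t)), (Rabs_pos_eq (1 - _)) by lra.
    generalize (Rabs_pos E) (Rabs_pos X). nra.
Qed.
End Low.

Lemma Z_series VP d E X : 0 <= d < 1 ->
  is_series (fun t => d ^ t * Zt VP E X t)
    (E * / (1 - d * rho2 VP) + X * (/ (1 - d) - / (1 - d * rho2 VP))).
Proof.
  intros Hd. unfold Zt. assert (Hr : 0 < rho2 VP < 1).
  { unfold rho2. generalize (exp_pos (-1)) (exp_pos VP); intros. split. apply Rdiv_lt_0_compat; lra.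
    apply (Rmult_lt_reg_r (1 + exp VP + exp (-1))). lra. unfold Rdiv. rewrite Rmult_assoc, Rinv_l; lra. }
  assert (Hdr : 0 <= d * rho2 VP < 1) by (split; nra).
  apply (isR_ext (fun t => E * (d * rho2 VP) ^ t + (X * d ^ t + (- X) * (d * rho2 VP) ^ t))).
  intros t. rewrite Rpow_mult_distr. ring.
  replace (X * (/ (1 - d) - / (1 - d * rho2 VP))) with (X * / (1 - d) + - X * / (1 - d * rho2 VP)) by ring.
  apply isR_plus. apply isR_scal, geom_is; auto.
  apply isR_plus; apply isR_scal, geom_is; auto.
Qed.

Lemma lim_from_bound (g : R -> R) l K M s : 0 <= K -> 0 <= M -> 0 <= s < 1 ->
  (forall N : nat, exists p1, 0 < p1 /\ forall p, 0 < p < p1 -> Rabs (g p - l) <= K * p + M * s ^ N) ->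
  filterlim g (at_right 0) (locally l).
Proof.
  intros HK HM Hs H. apply filterlim_locally. intros [eps He]. simpl.
  destruct (pow_lt_1_zero s ltac:(rewrite Rabs_pos_eq; lra) (eps / (2 * (M + 1)))) as [N HN].
  apply Rdiv_lt_0_compat; lra.
  destruct (H N) as [p1 [Hp1 Hb]].
  assert (HsN := HN N (le_n N)). rewrite Rabs_pos_eq in HsN by (apply pow_le; lra).
  assert (HMs : M * s ^ N < eps / 2).
  { apply Rle_lt_trans with ((M + 1) * s ^ N). apply Rmult_le_compat_r. apply pow_le; lra. lra.
    apply Rlt_le_trans with ((M + 1) * (eps / (2 * (M + 1)))). apply Rmult_lt_compat_l; lra.
    right; field; lra. }
  set (d0 := Rmin p1 (eps / (2 * (K + 1)))).
  assert (Hd0 : 0 < d0) by (apply Rmin_glb_lt; auto; apply Rdiv_lt_0_compat; lra).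
  assert (Hd1 : d0 <= p1) by apply Rmin_l.
  assert (Hd2 : d0 <= eps / (2 * (K + 1))) by apply Rmin_r.
  clearbody d0.
  exists (mkposreal d0 Hd0). intros y Hy Hy0. simpl in Hy.
  unfold ball in Hy; simpl in Hy; unfold AbsRing_ball, abs, minus, plus, opp in Hy; simpl in Hy.
  rewrite Ropp_0, Rplus_0_r, Rabs_pos_eq in Hy by lra.
  assert (y < p1) by lra.
  assert (HKy : K * y < eps / 2).
  { apply Rle_lt_trans with ((K + 1) * y). nra.
    apply Rlt_le_trans with ((K + 1) * (eps / (2 * (K + 1)))). apply Rmult_lt_compat_l. lra.
    lra.
    right; field; lra. }
  unfold ball; simpl; unfold AbsRing_ball, abs, minus, plus, opp; simpl.
  specialize (Hb y ltac:(lra)). unfold Rminus in Hb. lra.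
Qed.

Definition Ee VP := win3 VP 0 (-1) + win3 (-1) 0 VP.
Definition Xe VP := win3 VP 0 VP + win3 VP 0 VP.

Lemma eng_vals p VP vN a b : 0 <= eng_reward p VP vN a b <= 1.
Proof.
  unfold eng_reward. rewrite !win3_eq, !exp_0.
  generalize (exp_pos VP) (exp_pos vN); intros.
  destruct (pear_explore p VP a b); split.
  - apply Rplus_le_le_0_compat; apply Rdiv_le_0_compat; lra.
  - replace (exp VP / (exp VP + 1 + exp vN) + exp vN / (exp vN + 1 + exp VP))
      with ((exp VP + exp vN) / (exp VP + exp vN + 1)) by (field; lra).
    apply (Rmult_le_reg_r (exp VP + exp vN + 1)). lra.
    unfold Rdiv; rewrite Rmult_assoc, Rinv_l; lra.
  - apply Rplus_le_le_0_compat; apply Rdiv_le_0_compat; lra.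
  - replace (exp VP / (exp VP + 1 + exp VP) + exp VP / (exp VP + 1 + exp VP))
      with ((2 * exp VP) / (2 * exp VP + 1)) by (field; lra).
    apply (Rmult_le_reg_r (2 * exp VP + 1)). lra.
    unfold Rdiv; rewrite Rmult_assoc, Rinv_l; lra.
Qed.

Lemma eng_bound VP d N p : 0 <= d < 1 -> 0 < p < 1 ->
  (1 + exp VP) * p < rho2 VP ^ N * (1 - rho2 VP) ->
  Rabs (pear_eng VP d p - Series (fun t => d ^ t * Zt VP (Ee VP) (Xe VP) t))
    <= p / (1 - d) + 2 * 1 * sqrt d ^ N / (1 - sqrt d).
Proof.
  intros Hd Hp HN. unfold pear_eng.
  set (k := (1 - p) / p).
  set (Xh := fun t => pear_exp p VP k t (eng_reward p VP k) 0 0).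
  set (Yl := fun t => pear_exp p VP (-1) t (eng_reward p VP (-1)) 0 0).
  assert (HXh : forall t, 0 <= Xh t <= 1).
  { intros t. apply pe_bound. intros; apply eng_vals. }
  assert (HYl : forall t, 0 <= Yl t <= 1).
  { intros t. apply pe_bound. intros; apply eng_vals. }
  assert (HE : 0 <= Ee VP <= 1) by (generalize (eng_vals p VP (-1) 0 0); unfold eng_reward; rewrite explore_0; auto).
  assert (HX : 0 <= Xe VP <= 1).
  { assert (Hf1 : pear_explore p VP 0 1 = false).
    { apply explore_1; auto. simpl. rewrite Rmult_1_l.
      destruct (one_minus_rho1 p VP Hp) as [_ B].
      assert (rho2 VP ^ N <= 1) by (apply pow_le1; destruct (rho_props p VP Hp); lra).
      destruct (rho_props p VP Hp) as [_ [_ H3]].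
      assert (0 <= rho2 VP ^ N) by (apply pow_le; destruct (rho_props p VP Hp); lra).
      destruct (rho_props p VP Hp) as [H1 _]. nra. }
    generalize (eng_vals p VP (-1) 0 1); unfold eng_reward; rewrite Hf1; auto. }
  assert (HZ : forall t, 0 <= Zt VP (Ee VP) (Xe VP) t <= 1).
  { intros t. unfold Zt. destruct (rho_props p VP Hp) as [H1 [H2 H3]].
    assert (0 <= rho2 VP ^ t <= 1) by (split; [apply pow_le; lra|apply pow_le1; lra]). split; nra. }
  apply (ser_close d (fun t => p * Xh t + (1 - p) * Yl t) (Zt VP (Ee VP) (Xe VP)) N p 1); auto.
  - intros t. specialize (HXh t). specialize (HYl t). specialize (HZ t).
    split; rewrite Rabs_pos_eq; nra.
  - intros t Ht. unfold Yl. rewrite (low_eq p VP (eng_reward p VP (-1)) (Ee VP) (Xe VP) N); auto.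
    specialize (HXh t). specialize (HZ t).
    replace (p * Xh t + (1 - p) * Zt VP (Ee VP) (Xe VP) t - Zt VP (Ee VP) (Xe VP) t)
      with (p * (Xh t - Zt VP (Ee VP) (Xe VP) t)) by ring.
    rewrite Rabs_mult, Rabs_pos_eq by lra.
    assert (Rabs (Xh t - Zt VP (Ee VP) (Xe VP) t) <= 1) by (apply Rabs_le; lra). nra.
Qed.

Definition Eu VP := emax3 0 VP (-1).
Definition Xu VP := emax3 0 VP VP.
Definition C1 VP := ln (1 + 2 * exp VP) + ln (2 + exp VP).

Lemma ln_ge0 x : 1 <= x -> 0 <= ln x.
Proof. intros. rewrite <- ln_1. apply ln_le; lra. Qed.

Lemma high_vals p VP a b : 0 < p < 1 ->
  let k := (1 - p) / p in
  0 <= util_reward p VP k a b <= k + C1 VP /\ (b = 0%nat -> k <= util_reward p VP k a b).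
Proof.
  intros Hp k. assert (Hk : 0 < k) by (apply Rdiv_lt_0_compat; lra).
  generalize (exp_pos VP) (exp_pos k) (exp_ineq1_le k); intros.
  assert (HC1a : 0 <= ln (1 + 2 * exp VP)) by (apply ln_ge0; lra).
  assert (HC1b : 0 <= ln (2 + exp VP)) by (apply ln_ge0; lra).
  assert (Hlow : k <= ln (1 + exp VP + exp k)).
  { rewrite <- (ln_exp k) at 1. apply ln_le. lra. lra. }
  assert (Hup : ln (1 + exp VP + exp k) <= k + ln (2 + exp VP)).
  { rewrite <- (ln_exp k) at 2. rewrite <- ln_mult by lra. apply ln_le. lra. nra. }
  unfold util_reward. rewrite !emax3_eq, !exp_0.
  destruct (pear_explore p VP a b) eqn:He.
  - split. split. lra. unfold C1; lra. intros; lra.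
  - split. split. apply ln_ge0; lra.
    replace (1 + exp VP + exp VP) with (1 + 2 * exp VP) by ring. unfold C1; lra.
    intros ->. rewrite explore_0 in He; auto. discriminate.
Qed.

Lemma ser_split d (X Y : nat -> R) p MX MY : 0 <= d < 1 ->
  (forall t, Rabs (X t) <= MX) -> (forall t, Rabs (Y t) <= MY) ->
  Series (fun t => d ^ t * (p * X t + (1 - p) * Y t)) =
  p * Series (fun t => d ^ t * X t) + (1 - p) * Series (fun t => d ^ t * Y t).
Proof.
  intros Hd HX HY.
  destruct (ex_bounded d X MX Hd HX) as [lx Hx].
  destruct (ex_bounded d Y MY Hd HY) as [ly Hy].
  rewrite (is_series_unique _ _ Hx), (is_series_unique _ _ Hy).
  apply is_series_unique.
  apply (isR_ext (fun t => p * (d ^ t * X t) + (1 - p) * (d ^ t * Y t))). intros; ring.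
  apply isR_plus; apply isR_scal; auto.
Qed.

Definition Mu VP := Rabs (Eu VP) + Rabs (Xu VP).
Definition Ku VP d := (C1 VP + 1) / (1 - d) + (1 + exp VP) / ((1 - d) * (1 - d)) + 1 / (1 - d) + Mu VP / (1 - d).

Lemma util_bound VP d N p : 0 <= d < 1 -> 0 < p < 1 ->
  (1 + exp VP) * p < rho2 VP ^ N * (1 - rho2 VP) ->
  Rabs (pear_util VP d p - (1 / (1 - d) + Series (fun t => d ^ t * Zt VP (Eu VP) (Xu VP) t)))
    <= Ku VP d * p + 2 * Mu VP * sqrt d ^ N / (1 - sqrt d).
Proof.
  intros Hd Hp HN.
  set (k := (1 - p) / p).
  assert (Hk : 0 < k) by (apply Rdiv_lt_0_compat; lra).
  assert (Hpk : p * k = 1 - p) by (unfold k; field; lra).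
  set (Xh := fun t => pear_exp p VP k t (util_reward p VP k) 0 0).
  set (Yl := fun t => pear_exp p VP (-1) t (util_reward p VP (-1)) 0 0).
  assert (E0 : pear_util VP d p = Series (fun t => d ^ t * (p * Xh t + (1 - p) * Yl t))) by reflexivity.
  rewrite E0. clear E0.
  set (q := rho1 p VP).
  destruct (rho_props p VP Hp) as [R1 [R2 R3]]. fold q in R2, R3.
  assert (HC1 : 0 <= C1 VP).
  { unfold C1. generalize (exp_pos VP); intros.
    assert (0 <= ln (1 + 2 * exp VP)) by (apply ln_ge0; lra).
    assert (0 <= ln (2 + exp VP)) by (apply ln_ge0; lra). lra. }
  assert (HXh : forall t, 0 <= Xh t <= k + C1 VP).
  { intros t. apply pe_bound. intros a b. apply (high_vals p VP a b Hp). }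
  assert (HXl : forall t, q ^ t * k <= Xh t).
  { intros t. unfold q. rewrite <- w1_high. apply pe_lower.
    intros a b. apply (proj1 (proj1 (high_vals p VP a b Hp))).
    intros a. apply (proj2 (high_vals p VP a 0 Hp)). auto.
    intros a. apply explore_0; auto. }
  assert (HYl : forall t, Rabs (Yl t) <= Mu VP /\ Rabs (Zt VP (Eu VP) (Xu VP) t) <= Mu VP).
  { intros t. apply (low_bounds p VP (util_reward p VP (-1)) (Eu VP) (Xu VP)); auto. }
  rewrite (ser_split d Xh Yl p (k + C1 VP) (Mu VP)); auto.
  2: { intros t. rewrite Rabs_pos_eq; apply HXh. }
  2: { intros t. apply HYl. }
  set (A := Series (fun t => d ^ t * Xh t)).
  set (B := Series (fun t => d ^ t * Yl t)).
  set (Lz := Series (fun t => d ^ t * Zt VP (Eu VP) (Xu VP) t)).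
  assert (HdB : 0 < 1 - d) by lra.
  assert (Hdq : 0 <= d * q < 1) by (split; nra).
  assert (HAu : A <= (k + C1 VP) / (1 - d)).
  { unfold A. rewrite <- (is_series_unique (fun t => (k + C1 VP) * d ^ t) ((k + C1 VP) / (1 - d))).
    apply Series_le. intros t. specialize (HXh t). assert (0 <= d ^ t) by (apply pow_le; lra).
    split. nra. nra.
    exists ((k + C1 VP) / (1 - d)). apply isR_scal, geom_is; auto.
    apply isR_scal, geom_is; auto. }
  assert (HAl : k / (1 - d * q) <= A).
  { unfold A. rewrite <- (is_series_unique (fun t => k * (d * q) ^ t) (k / (1 - d * q))).
    apply Series_le. intros t. specialize (HXh t). specialize (HXl t).
    assert (0 <= d ^ t) by (apply pow_le; lra). assert (0 <= q ^ t) by (apply pow_le; lra).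
    rewrite Rpow_mult_distr. split. apply Rmult_le_pos; [lra|]. apply Rmult_le_pos; lra. nra.
    apply (ex_bounded d Xh (k + C1 VP)); auto. intros t; rewrite Rabs_pos_eq; apply HXh.
    apply isR_scal, geom_is; auto. }
  assert (HBL : Rabs (B - Lz) <= 0 / (1 - d) + 2 * Mu VP * sqrt d ^ N / (1 - sqrt d)).
  { apply (ser_close d Yl (Zt VP (Eu VP) (Xu VP)) N 0 (Mu VP)); auto.
    intros t Ht. unfold Yl. rewrite (low_eq p VP (util_reward p VP (-1)) (Eu VP) (Xu VP) N); auto.
    rewrite Rminus_diag, Rabs_R0. lra. }
  assert (HB : Rabs B <= Mu VP / (1 - d)).
  { apply (ser_abs_le _ (fun t => Mu VP * d ^ t)). intros t.
    rewrite Rabs_mult, Rabs_pos_eq by (apply pow_le; lra). rewrite Rmult_comm.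
    apply Rmult_le_compat_r. apply pow_le; lra. apply HYl.
    apply isR_scal, geom_is; auto. }
  destruct (one_minus_rho1 p VP Hp) as [_ Hq]. fold q in Hq.
  set (C := 1 + exp VP) in *.
  assert (HC : 0 < C) by (unfold C; generalize (exp_pos VP); lra).
  assert (HpAu : p * A - 1 / (1 - d) <= p * ((C1 VP + 1) / (1 - d))).
  { apply Rle_trans with (p * ((k + C1 VP) / (1 - d)) - 1 / (1 - d)).
    apply Rplus_le_compat_r. apply Rmult_le_compat_l; lra.
    replace (p * ((k + C1 VP) / (1 - d)) - 1 / (1 - d)) with ((p * k + p * C1 VP - 1) / (1 - d)) by (field; lra).
    rewrite Hpk. replace (p * ((C1 VP + 1) / (1 - d))) with ((p * C1 VP + p) / (1 - d)) by (field; lra).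
    unfold Rdiv. apply Rmult_le_compat_r. left; apply Rinv_0_lt_compat; lra. lra. }
  assert (HpAl : - (p * (1 / (1 - d))) - p * (C / ((1 - d) * (1 - d))) <= p * A - 1 / (1 - d)).
  { assert (HA1 : (1 - p) / (1 - d * q) <= p * A).
    { rewrite <- Hpk. replace (p * k / (1 - d * q)) with (p * (k / (1 - d * q))) by (field; lra).
      apply Rmult_le_compat_l; lra. }
    set (a := 1 - d * q) in *. set (b := 1 - d) in *.
    assert (Hab : b <= a) by (unfold a, b; nra).
    assert (Hab2 : a - b <= C * p) by (unfold a, b; nra).
    assert (Hb0 : 0 < b) by lra. assert (Ha0 : 0 < a) by lra.
    assert (Hnum : 0 <= C * p * a - (1 - p) * b * (a - b)).
    { assert ((1 - p) * b * (a - b) <= b * (a - b)) by (assert (0 <= b * (a - b)) by nra; nra).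
      assert (b * (a - b) <= b * (C * p)) by (apply Rmult_le_compat_l; lra).
      assert (b * (C * p) <= a * (C * p)) by (apply Rmult_le_compat_r; nra). nra. }
    assert (E : (1 - p) / a - 1 / b + p * (1 / b) + p * (C / (b * b)) =
                (C * p * a - (1 - p) * b * (a - b)) / (a * b * b)) by (field; lra).
    assert (0 <= (C * p * a - (1 - p) * b * (a - b)) / (a * b * b)).
    { apply Rdiv_le_0_compat; auto. apply Rmult_lt_0_compat; [apply Rmult_lt_0_compat|]; lra. }
    lra. }
  unfold Ku. fold C.
  set (s := sqrt d) in *.
  set (T := 2 * Mu VP * s ^ N / (1 - s)) in *.
  assert (EK : ((C1 VP + 1) / (1 - d) + C / ((1 - d) * (1 - d)) + 1 / (1 - d) + Mu VP / (1 - d)) * p =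
     p * ((C1 VP + 1) / (1 - d)) + p * (C / ((1 - d) * (1 - d))) + p * (1 / (1 - d)) + p * (Mu VP / (1 - d))) by ring.
  rewrite EK.
  replace (0 / (1 - d)) with 0 in HBL by (field; lra).
  apply Rabs_le_between in HBL. apply Rabs_le_between in HB.
  assert (HpB : - (p * (Mu VP / (1 - d))) <= p * B <= p * (Mu VP / (1 - d))).
  { split. rewrite Ropp_mult_distr_r. apply Rmult_le_compat_l; lra. apply Rmult_le_compat_l; lra. }
  assert (0 <= p * ((C1 VP + 1) / (1 - d))) by (apply Rmult_le_pos; [lra|apply Rdiv_le_0_compat; lra]).
  assert (0 <= p * (C / ((1 - d) * (1 - d)))) by (apply Rmult_le_pos; [lra|apply Rdiv_le_0_compat; nra]).
  assert (0 <= p * (1 / (1 - d))) by (apply Rmult_le_pos; [lra|apply Rdiv_le_0_compat; lra]).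
  apply Rabs_le. split; lra.
Qed.

Lemma rho2_eq VP : rho2 VP = / (1 + exp 1 + exp (VP + 1)).
Proof.
  unfold rho2. rewrite exp_plus. generalize (exp_pos 1) (exp_pos VP); intros.
  assert (E : exp (-1) = / exp 1) by (rewrite <- exp_Ropp; reflexivity). rewrite E. field.
  split; nra.
Qed.

Lemma Ee_eq VP : Ee VP = (exp VP + exp (-1)) / (1 + exp VP + exp (-1)).
Proof.
  unfold Ee. rewrite !win3_eq, exp_0. generalize (exp_pos (-1)) (exp_pos VP); intros. field. lra.
Qed.

Lemma Xe_eq VP : Xe VP = 2 * exp VP / (1 + 2 * exp VP).
Proof.
  unfold Xe. rewrite !win3_eq, exp_0. generalize (exp_pos VP); intros. field. lra.
Qed.

Lemma Eu_eq VP : Eu VP = ln (1 + exp (-1) + exp VP).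
Proof. unfold Eu. rewrite emax3_eq, exp_0. f_equal. ring. Qed.

Lemma Xu_eq VP : Xu VP = ln (1 + 2 * exp VP).
Proof. unfold Xu. rewrite emax3_eq, exp_0. f_equal. ring. Qed.

Lemma rho2_01 VP : 0 < rho2 VP < 1.
Proof. destruct (rho_props (1/2) VP) as [A [B C]]. lra. lra. Qed.

Lemma sqrt_01 d : 0 <= d < 1 -> 0 <= sqrt d < 1.
Proof. intros. split. apply sqrt_pos. rewrite <- sqrt_1. apply sqrt_lt_1_alt. lra. Qed.

Lemma exists_p1 VP (N : nat) : exists p1, 0 < p1 /\ forall p, 0 < p < p1 ->
  0 < p < 1 /\ (1 + exp VP) * p < rho2 VP ^ N * (1 - rho2 VP).
Proof.
  destruct (rho2_01 VP) as [H1 H2].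
  set (c := rho2 VP ^ N * (1 - rho2 VP)).
  assert (Hc : 0 < c) by (unfold c; apply Rmult_lt_0_compat; [apply pow_lt|]; lra).
  assert (HC : 0 < 1 + exp VP) by (generalize (exp_pos VP); lra).
  exists (Rmin (1/2) (c / (1 + exp VP))). split.
  apply Rmin_glb_lt. lra. apply Rdiv_lt_0_compat; lra.
  intros p Hp. generalize (Rmin_l (1/2) (c / (1 + exp VP))) (Rmin_r (1/2) (c / (1 + exp VP))); intros.
  split. lra.
  apply Rlt_le_trans with ((1 + exp VP) * (c / (1 + exp VP))). apply Rmult_lt_compat_l; lra.
  right; field; lra.
Qed.

Theorem theorem2 (VP delta : R) (hVP : 0 <= VP) (hd0 : 0 <= delta) (hd1 : delta < 1) :
  let rho := / (1 + exp 1 + exp (VP + 1)) in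
  filterlim (fun p => pear_eng VP delta p) (at_right 0)
    (locally (1 / (1 - delta * rho) * ((exp VP + exp (-1)) / (1 + exp VP + exp (-1)))
              + 1 / (1 - delta) * (delta * (1 - rho) / (1 - delta * rho))
                * (2 * exp VP / (1 + 2 * exp VP))))
  /\
  filterlim (fun p => pear_util VP delta p) (at_right 0)
    (locally (1 / (1 - delta)
              + 1 / (1 - delta * rho) * ln (1 + exp (-1) + exp VP)
              + 1 / (1 - delta) * (delta * (1 - rho) / (1 - delta * rho))
                * ln (1 + 2 * exp VP))).
Proof.
  intros rho. unfold rho. rewrite <- (rho2_eq VP).
  destruct (rho2_01 VP) as [Hr1 Hr2].
  assert (Hd : 0 <= delta < 1) by lra.
  destruct (sqrt_01 delta Hd) as [Hs1 Hs2].
  assert (Hdr : 0 < 1 - delta * rho2 VP) by nra.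
  split.
  - assert (EL : Series (fun t => delta ^ t * Zt VP (Ee VP) (Xe VP) t) =
      1 / (1 - delta * rho2 VP) * ((exp VP + exp (-1)) / (1 + exp VP + exp (-1)))
      + 1 / (1 - delta) * (delta * (1 - rho2 VP) / (1 - delta * rho2 VP)) * (2 * exp VP / (1 + 2 * exp VP))).
    { rewrite (is_series_unique _ _ (Z_series VP delta (Ee VP) (Xe VP) Hd)).
      rewrite Ee_eq, Xe_eq. generalize (exp_pos VP) (exp_pos (-1)); intros. field. repeat split; lra. }
    rewrite <- EL.
    apply (lim_from_bound _ _ (1 / (1 - delta)) (2 * 1 / (1 - sqrt delta)) (sqrt delta)).
    apply Rdiv_le_0_compat; lra. apply Rdiv_le_0_compat; lra. lra.
    intros N. destruct (exists_p1 VP N) as [p1 [Hp1 H]]. exists p1. split; auto.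
    intros p Hp. destruct (H p Hp) as [Hp' HN].
    eapply Rle_trans. apply (eng_bound VP delta N p Hd Hp' HN).
    right. field. lra.
  - assert (EL : 1 / (1 - delta) + Series (fun t => delta ^ t * Zt VP (Eu VP) (Xu VP) t) =
      1 / (1 - delta) + 1 / (1 - delta * rho2 VP) * ln (1 + exp (-1) + exp VP)
      + 1 / (1 - delta) * (delta * (1 - rho2 VP) / (1 - delta * rho2 VP)) * ln (1 + 2 * exp VP)).
    { rewrite (is_series_unique _ _ (Z_series VP delta (Eu VP) (Xu VP) Hd)).
      rewrite Eu_eq, Xu_eq. field. repeat split; lra. }
    rewrite <- EL.
    apply (lim_from_bound _ _ (Ku VP delta) (2 * Mu VP / (1 - sqrt delta)) (sqrt delta)).
    + unfold Ku.
      assert (0 <= C1 VP).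
      { unfold C1. generalize (exp_pos VP); intros.
        assert (0 <= ln (1 + 2 * exp VP)) by (apply ln_ge0; lra).
        assert (0 <= ln (2 + exp VP)) by (apply ln_ge0; lra). lra. }
      assert (0 <= Mu VP) by (unfold Mu; generalize (Rabs_pos (Eu VP)) (Rabs_pos (Xu VP)); lra).
      generalize (exp_pos VP); intros.
      assert (0 <= (C1 VP + 1) / (1 - delta)) by (apply Rdiv_le_0_compat; lra).
      assert (0 <= (1 + exp VP) / ((1 - delta) * (1 - delta))) by (apply Rdiv_le_0_compat; nra).
      assert (0 <= 1 / (1 - delta)) by (apply Rdiv_le_0_compat; lra).
      assert (0 <= Mu VP / (1 - delta)) by (apply Rdiv_le_0_compat; lra).
      lra.
    + apply Rdiv_le_0_compat. unfold Mu. generalize (Rabs_pos (Eu VP)) (Rabs_pos (Xu VP)). lra. lra.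
    + lra.
    + intros N. destruct (exists_p1 VP N) as [p1 [Hp1 H]]. exists p1. split; auto.
      intros p Hp. destruct (H p Hp) as [Hp' HN].
      eapply Rle_trans. apply (util_bound VP delta N p Hd Hp' HN).
      right. field. lra.
Qed.
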